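(* For all $\eta,\varepsilon>0$ and $c\in\mathbb N$ there exist $\eta'>0$ and $n_0$ such that the following holds for all $n\ge n_0$. Let $H$ be a $3$-graph of order $n$. Let $V_1,\dots,V_d$ be disjoint subsets of $V(H)$ with $2\le d\le4$, each $(c,\eta)$-closed in $H$. Let $a_1,\dots,a_d$ be non-negative integers with $a_1\ge1$ and $\sum_i a_i=4$. Suppose there are at least $\varepsilon n^4$ copies $F$ of $K_4^-$ in $H$ with $|V(F)\cap V_i|=a_i$ for all $i\in[d]$, and at least $\varepsilon n^4$ copies $F'$ of $K_4^-$ in $H$ with $|V(F')\cap V_1|=a_1-1$, $|V(F')\cap V_2|=a_2+1$ and $|V(F')\cap V_j|=a_j$ for all $3\le j\le d$. Then $V_1\cup V_2$ is $(5c+1,\eta')$-closed in $H$.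
   Context: $K_4^-$ is the $3$-graph with $4$ vertices and $3$ edges; copies are counted as $4$-subsets of $V(H)$ spanning a (not necessarily induced) copy. A $K_4^-$-factor is a set of vertex-disjoint copies covering all vertices. Let $H$ be a $3$-graph of order $n$. For $c\in\mathbb N$, a set $S\subseteq V(H)$ is an $(x,y)$-connector of length $c$ if $S\cap\{x,y\}=\emptyset$, $|S|=4c-1$, and both $H[S\cup\{x\}]$ and $H[S\cup\{y\}]$ contain $K_4^-$-factors. Vertices $x,y$ are $(c,\eta)$-close if there are at least $\eta n^{4c-1}$ $(x,y)$-connectors of length $c$ in $H$. A set $U\subseteq V(H)$ is $(c,\eta)$-closed in $H$ if every two vertices of $U$ are $(c,\eta)$-close in $H$. *)

(* Defs.v *)
From Stdlib Require Import Reals.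
From mathcomp Require Import all_boot.
Set Implicit Arguments. Unset Strict Implicit. Unset Printing Implicit Defensive.

(* A 3-graph of order n: vertex set 'I_n, edge set a set of 3-subsets
   (uniformity is assumed as a hypothesis in the theorem). *)
Definition hgraph (n : nat) := {set {set 'I_n}}.

(* The 4-set S spans a (not necessarily induced) copy of K_4^- (3 edges). *)
Definition spans_K4m n (H : hgraph n) (S : {set 'I_n}) : bool :=
  (#|S| == 4) && (3 <= #|[set e in H | e \subset S]|).

Definition has_K4m_factor n (H : hgraph n) (X : {set 'I_n}) : bool :=
  [exists P : {set {set 'I_n}}, partition P X && [forall B in P, spans_K4m H B]].

Definition connector n (H : hgraph n) (c : nat) (x y : 'I_n) (S : {set 'I_n}) : bool :=
  [&& x \notin S, y \notin S, #|S| == (4 * c - 1)%nat,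
      has_K4m_factor H (x |: S) & has_K4m_factor H (y |: S)].

Definition is_close n (H : hgraph n) (c : nat) (eta : R) (x y : 'I_n) : Prop :=
  Rle (Rmult eta (pow (INR n) (4 * c - 1))) (INR #|[set S | connector H c x y S]|).

Definition is_closed n (H : hgraph n) (c : nat) (eta : R) (U : {set 'I_n}) : Prop :=
  forall x y, x \in U -> y \in U -> x != y -> is_close H c eta x y.

Definition count_K4m n (H : hgraph n) (P : {set 'I_n} -> bool) : nat :=
  #|[set S : {set 'I_n} | spans_K4m H S && P S]|.

(* Main.v *)
Require Import Defs.
From Stdlib Require Import Reals Lra.
From mathcomp Require Import all_boot zify.
Set Implicit Arguments. Unset Strict Implicit. Unset Printing Implicit Defensive.
Delimit Scope R_scope with Re.

Section Basic.
Variable n : nat.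
Implicit Types (H : hgraph n) (A B : {set 'I_n}).

Lemma disjP A B : [disjoint A & B] -> forall z, z \in A -> z \in B -> False.
Proof. by move=> D z zA zB; rewrite (disjointFr D zA) in zB. Qed.

Lemma disjI A B : (forall z, z \in A -> z \in B -> False) -> [disjoint A & B].
Proof.
move=> h; rewrite -setI_eq0; apply/eqP/setP => z; rewrite !inE.
by apply/negbTE/negP => /andP[a b]; apply: (h z).
Qed.

Lemma factorU H A B : has_K4m_factor H A -> has_K4m_factor H B ->
  [disjoint A & B] -> has_K4m_factor H (A :|: B).
Proof.
move=> /existsP[P /andP[pP fP]] /existsP[Q /andP[pQ fQ]] D.
apply/existsP; exists (P :|: Q); apply/andP; split.
  move: pP pQ => /and3P[/eqP cP tP nP] /and3P[/eqP cQ tQ nQ].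
  apply/and3P; split.
  - by rewrite /cover bigcup_setU -/(cover P) -/(cover Q) cP cQ.
  - rewrite setUC; apply: trivIsetU => //. by rewrite cP cQ disjoint_sym.
  - by rewrite inE negb_or nP nQ.
apply/forallP => F; apply/implyP; rewrite inE => /orP[FP|FQ].
  by move/forallP: fP => /(_ F) /implyP; apply.
by move/forallP: fQ => /(_ F) /implyP; apply.
Qed.

Lemma factor1 H F : spans_K4m H F -> has_K4m_factor H F.
Proof.
move=> sF; apply/existsP; exists [set F]; apply/andP; split.
  apply/and3P; split; first by rewrite cover1.
  - exact: trivIset1.
  rewrite inE; apply/negP => /eqP F0; move: sF; rewrite /spans_K4m -F0 cards0.
  by [].
by apply/forallP => G; apply/implyP; rewrite inE => /eqP ->.
Qed.

End Basic.

Lemma sumR_lb (X : finType) (P : pred X) (h : X -> nat) (r : R) :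
  (forall x, P x -> (r <= INR (h x))%Re) ->
  (INR (\sum_(x | P x) 1) * r <= INR (\sum_(x | P x) h x))%Re.
Proof.
move=> hr.
apply: (big_ind2 (fun (a b : nat) => (INR b * r <= INR a)%Re)).
- by rewrite /=; lra.
- move=> a1 b1 a2 b2 h1 h2; rewrite !plus_INR; lra.
- by move=> x Px; rewrite /= Rmult_1_l; apply: hr.
Qed.

Lemma card_pairs (X Y : finType) (ok : pred X) (g : X -> pred Y) :
  #|[set t : X * Y | ok t.1 && g t.1 t.2]| = \sum_(x | ok x) #|[set y | g x y]|.
Proof.
rewrite -sum1_card (eq_bigl (fun t => ok t.1 && g t.1 t.2)); last first.
  by move=> t; rewrite inE.
rewrite -(pair_big_dep ok g (fun _ _ => 1)).
apply: eq_bigr => x _; rewrite -sum1_card; apply: eq_bigl => y; by rewrite inE.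
Qed.

Lemma chain (X Y : finType) (ok : pred X) (g : X -> pred Y) (r : R) :
  (forall x, ok x -> (r <= INR #|[set y | g x y]|)%Re) ->
  (INR #|[set x | ok x]| * r <= INR #|[set t : X * Y | ok t.1 && g t.1 t.2]|)%Re.
Proof.
move=> hr; rewrite card_pairs -sum1_card (eq_bigl ok); last by move=> x; rewrite inE.
exact: sumR_lb.
Qed.

Lemma bin_le_exp k m : 'C(k, m) <= k ^ m.
Proof.
apply: (@leq_trans (k ^_ m)).
  by rewrite -bin_ffact leq_pmulr // fact_gt0.
elim: m => [|m IH]; first by rewrite ffactn0.
rewrite ffactnSr expnSr leq_mul //; exact: leq_subr.
Qed.

Section Count.
Variable n : nat.

Lemma bad_bound (T : finType) (P : pred T) (g : T -> {set 'I_n}) (Z : {set 'I_n}) (B : nat) :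
 (forall z, #|[set t | P t && (z \in g t)]| <= B) ->
 #|[set t | P t && ~~ [disjoint g t & Z]]| <= #|Z| * B.
Proof.
move=> hB; move: {2}#|Z| (erefl #|Z|) => k; elim: k Z => [|k IH] Z hZ.
  move/eqP: hZ; rewrite cards_eq0 => /eqP ->; rewrite cards0 mul0n leqn0 cards_eq0.
  apply/eqP/setP => t; rewrite !inE; apply/negbTE; rewrite negb_and.
  have D0 : [disjoint g t & set0].
    by apply: disjI => w _; rewrite inE.
  by rewrite D0 orbT.
have: 0 < #|Z| by rewrite hZ.
case/card_gt0P => z zZ.
have hZ' : #|Z :\ z| = k by move: hZ; rewrite (cardsD1 z Z) zZ add1n => -[].
apply: (@leq_trans (#|[set t | P t && (z \in g t)]| + #|[set t | P t && ~~ [disjoint g t & Z :\ z]]|)).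
  apply: leq_trans (leq_card_setU _ _); apply: subset_leq_card; apply/subsetP => t.
  rewrite !inE => /andP[Pt nd]; rewrite Pt /=.
  case zg: (z \in g t) => //=; apply: contra nd => d'.
  apply: disjI => w wg wZ; have [ewz|nwz] := eqVneq w z; first by subst w; rewrite wg in zg.
  by apply: (disjP d' wg); rewrite !inE nwz.
by rewrite hZ mulSn leq_add // -hZ' IH.
Qed.

Definition Vt4 := ('I_n * 'I_n * 'I_n * 'I_n)%type.
Definition set4 (t : Vt4) : {set 'I_n} := [set t.1.1.1; t.1.1.2; t.1.2; t.2].

Lemma count4 z : #|[set t : Vt4 | z \in set4 t]| <= 4 * n ^ 3.
Proof.
set S1 := setX (setX (setX [set z] [set: 'I_n]) [set: 'I_n]) [set: 'I_n].
set S2 := setX (setX (setX [set: 'I_n] [set z]) [set: 'I_n]) [set: 'I_n].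
set S3 := setX (setX (setX [set: 'I_n] [set: 'I_n]) [set z]) [set: 'I_n].
set S4 := setX (setX (setX [set: 'I_n] [set: 'I_n]) [set: 'I_n]) [set z].
have c1 : #|S1| = n ^ 3 by rewrite !cardsX cards1 cardsT card_ord; lia.
have c2 : #|S2| = n ^ 3 by rewrite !cardsX cards1 cardsT card_ord; lia.
have c3 : #|S3| = n ^ 3 by rewrite !cardsX cards1 cardsT card_ord; lia.
have c4 : #|S4| = n ^ 3 by rewrite !cardsX cards1 cardsT card_ord; lia.
apply: (@leq_trans #|S1 :|: S2 :|: S3 :|: S4|).
  apply: subset_leq_card; apply/subsetP => -[[[a b] c] d].
  rewrite !inE /= => /orP[/orP[/orP[]|]|] /eqP ->; by rewrite !eqxx ?orbT.
apply: leq_trans (leq_card_setU _ _) _.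
rewrite c4; apply: leq_trans (leq_add (leq_card_setU _ _) (leqnn _)) _.
rewrite c3; apply: leq_trans (leq_add (leq_add (leq_card_setU _ _) (leqnn _)) (leqnn _)) _.
rewrite c1 c2; lia.
Qed.

Lemma countC z m : #|[set C : {set 'I_n} | (#|C| == m.+1) && (z \in C)]| <= n ^ m.
Proof.
set A := [set C : {set 'I_n} | (#|C| == m.+1) && (z \in C)].
have inj : {in A &, injective (fun C => C :\ z)}.
  move=> C1 C2; rewrite /A !inE => /andP[_ z1] /andP[_ z2] e.
  by rewrite -(setD1K z1) -(setD1K z2) e.
rewrite -(card_in_imset inj).
apply: (@leq_trans #|[set D : {set 'I_n} | #|D| == m]|).
  apply: subset_leq_card; apply/subsetP => D /imsetP[C]; rewrite /A inE => /andP[/eqP cC zC] ->.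
  rewrite inE; move: cC; rewrite (cardsD1 z C) zC add1n => -[->]; by [].
by rewrite card_draws card_ord bin_le_exp.
Qed.

End Count.

Lemma powE a b : Nat.pow a b = (a ^ b)%N.
Proof. by elim: b => //= b IH; rewrite IH expnS multE. Qed.

Section Stages.
Variable n : nat.

Lemma good_bad (T : finType) (P : pred T) (g : T -> {set 'I_n}) (Z : {set 'I_n}) :
  #|[set t | P t]| <= #|[set t | P t && [disjoint g t & Z]]| + #|[set t | P t && ~~ [disjoint g t & Z]]|.
Proof.
apply: leq_trans (leq_card_setU _ _); apply: subset_leq_card; apply/subsetP => t.
by rewrite !inE => Pt; rewrite Pt /=; case: [disjoint _ & _].
Qed.

Lemma conn_stage (X : finType) (ok : pred X) (p q : X -> 'I_n) (Z : X -> {set 'I_n})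
  (H : hgraph n) (c : nat) (eta : R) (K : nat) :
  (1 <= c)%N -> (2 * INR K <= eta * INR n)%Re ->
  (forall x, ok x -> is_close H c eta (p x) (q x) /\ (#|Z x| <= K)%N) ->
  (INR #|[set x | ok x]| * (eta / 2 * pow (INR n) (4 * c - 1)) <=
   INR #|[set t : X * {set 'I_n} | ok t.1 &&
         (connector H c (p t.1) (q t.1) t.2 && [disjoint t.2 & Z t.1])]|)%Re.
Proof.
move=> c1 hn hx; apply: (chain (g := fun x C => connector H c (p x) (q x) C && [disjoint C & Z x])).
move=> x okx; have [cl zK] := hx x okx.
set m1 := (4 * c - 2)%N.
have em : (4 * c - 1 = m1.+1)%N by rewrite /m1; lia.
have hb := good_bad (connector H c (p x) (q x)) id (Z x).
have hbad : (#|[set t | connector H c (p x) (q x) t && ~~ [disjoint t & Z x]]| <= K * n ^ m1)%N.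
  apply: leq_trans (bad_bound (g := id) _ _) _.
    move=> z; apply: leq_trans (countC z m1); apply: subset_leq_card; apply/subsetP => C.
    rewrite !inE => /andP[/and5P[_ _ cC _ _] ->]; by rewrite -em cC.
  by rewrite leq_mul2r zK orbT.
move: cl; rewrite /is_close em /= => cl.
have h1 : (INR #|[set t | connector H c (p x) (q x) t]| <=
   INR #|[set t | connector H c (p x) (q x) t && [disjoint t & Z x]]| + INR K * pow (INR n) m1)%Re.
  rewrite -pow_INR -mult_INR -plus_INR; apply: le_INR; apply/leP.
  rewrite powE multE plusE; by apply: leq_trans hb _; rewrite leq_add2l.
have pn : (0 <= pow (INR n) m1)%Re by apply: pow_le; apply: pos_INR.
have h2 : (2 * INR K * pow (INR n) m1 <= eta * INR n * pow (INR n) m1)%Re.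
  by apply: Rmult_le_compat_r.
move: cl h1 h2; set N := pow (INR n) m1; set A := INR n; set B := INR _.
rewrite (Rmult_assoc eta A N) => h1 h2 h3.
set P := (A * N)%Re in h1 h2 h3 *.
have -> : (eta / 2 * P = (eta * P) / 2)%Re by field.
move: h1 h2 h3; rewrite ?(Rmult_assoc 2 (INR K) N) ?(Rmult_assoc 8 (INR K) N) ?(Rmult_comm 4 N) -?(Rmult_assoc (INR K) N 4).
set EP := (eta * P)%Re; set KN := (INR K * N)%Re; set G := INR _; lra.
Qed.

Lemma tup_stage (X : finType) (ok : pred X) (good : pred (Vt4 n)) (Z : X -> {set 'I_n})
  (eps : R) (K : nat) :
  (eps * pow (INR n) 4 <= INR #|[set t | good t]|)%Re ->
  (8 * INR K <= eps * INR n)%Re ->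
  (forall x, ok x -> (#|Z x| <= K)%N) ->
  (INR #|[set x | ok x]| * (eps / 2 * pow (INR n) 4) <=
   INR #|[set t : X * Vt4 n | ok t.1 && (good t.2 && [disjoint set4 t.2 & Z t.1])]|)%Re.
Proof.
move=> hg hn hx; apply: (chain (g := fun x t => good t && [disjoint set4 t & Z x])).
move=> x okx; have zK := hx x okx.
have hb := good_bad good (@set4 n) (Z x).
have hbad : (#|[set t | good t && ~~ [disjoint set4 t & Z x]]| <= K * (4 * n ^ 3))%N.
  apply: leq_trans (bad_bound _ _) _.
    move=> z; apply: leq_trans (count4 z); apply: subset_leq_card; apply/subsetP => C.
    by rewrite !inE => /andP[_ ->].
  by rewrite leq_mul2r zK orbT.
have h1 : (INR #|[set t | good t]| <=
   INR #|[set t | good t && [disjoint set4 t & Z x]]| + INR K * (4 * pow (INR n) 3))%Re.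
  have e4 : (4 = INR 4)%Re by simpl; lra.
  rewrite e4 -pow_INR -!mult_INR -plus_INR; apply: le_INR; apply/leP.
  rewrite powE !multE plusE; by apply: leq_trans hb _; rewrite leq_add2l.
have pn : (0 <= pow (INR n) 3)%Re by apply: pow_le; apply: pos_INR.
have h2 : (8 * INR K * pow (INR n) 3 <= eps * INR n * pow (INR n) 3)%Re.
  by apply: Rmult_le_compat_r.
have e : (pow (INR n) 4 = INR n * pow (INR n) 3)%Re by simpl; ring.
move: hg h1 h2; rewrite e; set N := pow (INR n) 3; set A := INR n; set B := INR _.
rewrite (Rmult_assoc eps A N) => h1 h2 h3.
set P := (A * N)%Re in h1 h2 h3 *.
have -> : (eps / 2 * P = (eps * P) / 2)%Re by field.
move: h1 h2 h3; rewrite ?(Rmult_assoc 2 (INR K) N) ?(Rmult_assoc 8 (INR K) N) ?(Rmult_comm 4 N) -?(Rmult_assoc (INR K) N 4).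
set EP := (eps * P)%Re; set KN := (INR K * N)%Re; set G := INR _; lra.
Qed.

End Stages.

Lemma set4E n (t : Vt4 n) : set4 t =i [:: t.1.1.1; t.1.1.2; t.1.2; t.2].
Proof. by move=> z; rewrite /set4 !inE !orbA. Qed.

Lemma card_set4_le n (t : Vt4 n) : (#|set4 t| <= 4)%N.
Proof. by rewrite (eq_card (set4E t)); exact: card_size. Qed.

Lemma set4_uniq n (t : Vt4 n) : #|set4 t| = 4 -> uniq [:: t.1.1.1; t.1.1.2; t.1.2; t.2].
Proof. by move=> h; apply/card_uniqP; rewrite -(eq_card (set4E t)). Qed.

Lemma card2_le n (x y : 'I_n) : (#|[set x; y]| <= 2)%N.
Proof. by apply: leq_trans (leq_card_setU _ _) _; rewrite !cards1. Qed.

Section Core.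
Variables (n : nat) (H : hgraph n) (c : nat) (Vi Vj Q1 Q2 Q3 : {set 'I_n}) (x y : 'I_n).

Definition good4 (V0 : {set 'I_n}) (t : Vt4 n) : bool :=
  [&& spans_K4m H (set4 t), t.1.1.1 \in V0, t.1.1.2 \in Q1, t.1.2 \in Q2 & t.2 \in Q3].

Definition T1 := (unit * Vt4 n)%type.
Definition T2 := (T1 * Vt4 n)%type.
Definition T3 := (T2 * {set 'I_n})%type.
Definition T4 := (T3 * {set 'I_n})%type.
Definition T5 := (T4 * {set 'I_n})%type.
Definition T6 := (T5 * {set 'I_n})%type.
Definition T7 := (T6 * {set 'I_n})%type.

Definition tA (t : T2) := t.1.2.
Definition tB (t : T2) := t.2.
Definition Zb (t : T2) := set4 (tA t) :|: set4 (tB t) :|: [set x; y].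

Definition ok1 (t : T1) := true && (good4 Vi t.2 && [disjoint set4 t.2 & [set x; y]]).
Definition ok2 (t : T2) := ok1 t.1 &&
  (good4 Vj t.2 && [disjoint set4 t.2 & set4 t.1.2 :|: [set x; y]]).
Definition ok3 (t : T3) := ok2 t.1 &&
  (connector H c x (tA t.1).1.1.1 t.2 && [disjoint t.2 & Zb t.1]).
Definition ok4 (t : T4) := ok3 t.1 &&
  (connector H c y (tB t.1.1).1.1.1 t.2 && [disjoint t.2 & Zb t.1.1 :|: t.1.2]).
Definition ok5 (t : T5) := ok4 t.1 &&
  (connector H c (tA t.1.1.1).1.1.2 (tB t.1.1.1).1.1.2 t.2 &&
   [disjoint t.2 & Zb t.1.1.1 :|: t.1.1.2 :|: t.1.2]).
Definition ok6 (t : T6) := ok5 t.1 &&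
  (connector H c (tA t.1.1.1.1).1.2 (tB t.1.1.1.1).1.2 t.2 &&
   [disjoint t.2 & Zb t.1.1.1.1 :|: t.1.1.1.2 :|: t.1.1.2 :|: t.1.2]).
Definition ok7 (t : T7) := ok6 t.1 &&
  (connector H c (tA t.1.1.1.1.1).2 (tB t.1.1.1.1.1).2 t.2 &&
   [disjoint t.2 & Zb t.1.1.1.1.1 :|: t.1.1.1.1.2 :|: t.1.1.1.2 :|: t.1.1.2 :|: t.1.2]).

Definition fS (t : T7) : {set 'I_n} :=
  set4 (tA t.1.1.1.1.1) :|: set4 (tB t.1.1.1.1.1) :|: t.1.1.1.1.2 :|: t.1.1.1.2 :|:
  t.1.1.2 :|: t.1.2 :|: t.2.

End Core.

Lemma disj_neq n (A B : {set 'I_n}) p q : [disjoint A & B] -> p \in A -> q \in B -> p != q.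
Proof. by move=> D pA qB; apply/eqP => e; subst q; apply: (disjP D pA qB). Qed.

Lemma cardU_le n (A B : {set 'I_n}) : (#|A :|: B| <= #|A| + #|B|)%N.
Proof. exact: leq_card_setU. Qed.

Lemma cardU_leW n (A B : {set 'I_n}) k l : (#|A| <= k)%N -> #|B| = l -> (#|A :|: B| <= k + l)%N.
Proof. by move=> hA hB; apply: leq_trans (cardU_le _ _) _; rewrite hB leq_add2r. Qed.

Lemma Kb1 k : (10 + k <= 10 + 4 * k)%N. Proof. lia. Qed.
Lemma Kb2 k : (10 + k + k <= 10 + 4 * k)%N. Proof. lia. Qed.
Lemma Kb3 k : (10 + k + k + k <= 10 + 4 * k)%N. Proof. lia. Qed.
Lemma Kb4 k : (10 + k + k + k + k <= 10 + 4 * k)%N. Proof. lia. Qed.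

Lemma conn_card n (H : hgraph n) c p q C : connector H c p q C -> #|C| = (4 * c - 1)%N.
Proof. by case/and5P => _ _ /eqP. Qed.

Section Count2.
Variables (n : nat) (H : hgraph n) (c : nat) (Vi Vj Q1 Q2 Q3 : {set 'I_n}) (x y : 'I_n)
  (eta eps : R).
Hypotheses (c1 : (1 <= c)%N) (clVi : is_closed H c eta Vi) (clVj : is_closed H c eta Vj)
  (clQ1 : is_closed H c eta Q1) (clQ2 : is_closed H c eta Q2) (clQ3 : is_closed H c eta Q3)
  (xVi : x \in Vi) (yVj : y \in Vj).

Let Kc := (10 + 4 * (4 * c - 1))%N.

Lemma in4_1 (a : Vt4 n) : a.1.1.1 \in set4 a. Proof. by rewrite /set4 !inE eqxx. Qed.
Lemma in4_2 (a : Vt4 n) : a.1.1.2 \in set4 a. Proof. by rewrite /set4 !inE eqxx ?orbT. Qed.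
Lemma in4_3 (a : Vt4 n) : a.1.2 \in set4 a. Proof. by rewrite /set4 !inE eqxx ?orbT. Qed.
Lemma in4_4 (a : Vt4 n) : a.2 \in set4 a. Proof. by rewrite /set4 !inE eqxx ?orbT. Qed.

Lemma ok2_facts (t : T2 n) : ok2 H Vi Vj Q1 Q2 Q3 x y t ->
  [/\ good4 H Q1 Q2 Q3 Vi (tA t), good4 H Q1 Q2 Q3 Vj (tB t),
      [disjoint set4 (tA t) & [set x; y]] & [disjoint set4 (tB t) & set4 (tA t) :|: [set x; y]]].
Proof. by case/andP => /andP[_ /andP[g1 d1]] /andP[g2 d2]. Qed.

Lemma Zb_card (t : T2 n) : (#|Zb x y t| <= 10)%N.
Proof.
rewrite /Zb; apply: leq_trans (cardU_le _ _) _.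
apply: leq_trans (leq_add (cardU_le _ _) (card2_le x y)) _.
by have := card_set4_le (tA t); have := card_set4_le (tB t); lia.
Qed.

Let E := (eta / 2 * pow (INR n) (4 * c - 1))%Re.

Lemma count_chain :
  (eps * pow (INR n) 4 <= INR #|[set t | good4 H Q1 Q2 Q3 Vi t]|)%Re ->
  (eps * pow (INR n) 4 <= INR #|[set t | good4 H Q1 Q2 Q3 Vj t]|)%Re ->
  (8 * INR 6 <= eps * INR n)%Re -> (2 * INR Kc <= eta * INR n)%Re ->
  (0 < eta)%Re -> (0 < eps)%Re ->
  (1 * (eps / 2 * pow (INR n) 4) * (eps / 2 * pow (INR n) 4) * E * E * E * E * E <=
   INR #|[set t | ok7 H c Vi Vj Q1 Q2 Q3 x y t]|)%Re.
Proof.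
move=> hA hB he hc etap epsp.
have E0 : (0 <= E)%Re.
  rewrite /E; apply: Rmult_le_pos; first lra.
  by apply: pow_le; apply: pos_INR.
have s1 := tup_stage (ok := fun _ : unit => true) (Z := fun _ => [set x; y]) hA he
  (fun _ _ => leq_trans (card2_le x y) (isT : (2 <= 6)%N)).
have s2 := tup_stage (ok := ok1 H Vi Q1 Q2 Q3 x y) (Z := fun t => set4 t.2 :|: [set x; y]) hB he
  (fun t _ => leq_trans (cardU_le _ _) (leq_trans (leq_add (card_set4_le t.2) (card2_le x y)) (isT : (6 <= 6)%N))).
have s3 := conn_stage (ok := ok2 H Vi Vj Q1 Q2 Q3 x y) (p := fun _ => x) (q := fun t => (tA t).1.1.1)
  (Z := Zb x y) (H := H) c1 hc.
have s4 := conn_stage (ok := ok3 H c Vi Vj Q1 Q2 Q3 x y) (p := fun _ => y) (q := fun t => (tB t.1).1.1.1)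
  (Z := fun t => Zb x y t.1 :|: t.2) (H := H) c1 hc.
have s5 := conn_stage (ok := ok4 H c Vi Vj Q1 Q2 Q3 x y) (p := fun t => (tA t.1.1).1.1.2)
  (q := fun t => (tB t.1.1).1.1.2) (Z := fun t => Zb x y t.1.1 :|: t.1.2 :|: t.2) (H := H) c1 hc.
have s6 := conn_stage (ok := ok5 H c Vi Vj Q1 Q2 Q3 x y) (p := fun t => (tA t.1.1.1).1.2)
  (q := fun t => (tB t.1.1.1).1.2) (Z := fun t => Zb x y t.1.1.1 :|: t.1.1.2 :|: t.1.2 :|: t.2) (H := H) c1 hc.
have s7 := conn_stage (ok := ok6 H c Vi Vj Q1 Q2 Q3 x y) (p := fun t => (tA t.1.1.1.1).2)
  (q := fun t => (tB t.1.1.1.1).2) (Z := fun t => Zb x y t.1.1.1.1 :|: t.1.1.1.2 :|: t.1.1.2 :|: t.1.2 :|: t.2) (H := H) c1 hc.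
have m0 := @conn_card n H c.
have Kc10 : (10 <= Kc)%N by rewrite /Kc; lia.
have r0 : (0 <= eps / 2 * pow (INR n) 4)%Re.
  apply: Rmult_le_pos; last by apply: pow_le; apply: pos_INR.
  lra.
rewrite /ok7; apply: (Rle_trans _ _ _ _ (s7 _)); last first.
  move=> t /andP[/andP[/andP[/andP[/ok2_facts[gA gB dA dB] /andP[k0 _]] /andP[k4 _]] /andP[k5 _]] /andP[k6 _]].
  split; last first.
    apply: (leq_trans (cardU_leW (cardU_leW (cardU_leW (cardU_leW (Zb_card _) (m0 _ _ _ k0)) (m0 _ _ _ k4)) (m0 _ _ _ k5)) (m0 _ _ _ k6))).
    exact: Kb4.
  apply: clQ3; [by case/and5P: gA | by case/and5P: gB |].
  by rewrite eq_sym; apply: (disj_neq dB (in4_4 _)); rewrite in_setU in4_4.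
apply (Rmult_le_compat_r _ _ _ E0).
rewrite /ok6; apply: (Rle_trans _ _ _ _ (s6 _)); last first.
  move=> t /andP[/andP[/andP[/ok2_facts[gA gB dA dB] /andP[k0 _]] /andP[k4 _]] /andP[k5 _]].
  split; last first.
    apply: (leq_trans (cardU_leW (cardU_leW (cardU_leW (Zb_card _) (m0 _ _ _ k0)) (m0 _ _ _ k4)) (m0 _ _ _ k5))).
    exact: Kb3.
  apply: clQ2; [by case/and5P: gA | by case/and5P: gB |].
  by rewrite eq_sym; apply: (disj_neq dB (in4_3 _)); rewrite in_setU in4_3.
apply (Rmult_le_compat_r _ _ _ E0).
rewrite /ok5; apply: (Rle_trans _ _ _ _ (s5 _)); last first.
  move=> t /andP[/andP[/ok2_facts[gA gB dA dB] /andP[k0 _]] /andP[k4 _]].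
  split; last first.
    apply: (leq_trans (cardU_leW (cardU_leW (Zb_card _) (m0 _ _ _ k0)) (m0 _ _ _ k4))).
    exact: Kb2.
  apply: clQ1; [by case/and5P: gA | by case/and5P: gB |].
  by rewrite eq_sym; apply: (disj_neq dB (in4_2 _)); rewrite in_setU in4_2.
apply (Rmult_le_compat_r _ _ _ E0).
rewrite /ok4; apply: (Rle_trans _ _ _ _ (s4 _)); last first.
  move=> t /andP[/ok2_facts[gA gB dA dB] /andP[k0 _]].
  split; last first.
    apply: (leq_trans (cardU_leW (Zb_card _) (m0 _ _ _ k0))).
    exact: Kb1.
  apply: clVj => //; first by case/and5P: gB.
  by rewrite eq_sym; apply: (disj_neq dB (in4_1 _)); rewrite !inE eqxx ?orbT.
apply (Rmult_le_compat_r _ _ _ E0).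
rewrite /ok3; apply: (Rle_trans _ _ _ _ (s3 _)); last first.
  move=> t /ok2_facts[gA gB dA dB].
  split; last by apply: leq_trans (Zb_card _) Kc10.
  apply: clVi => //; first by case/and5P: gA.
  by rewrite eq_sym; apply: (disj_neq dA (in4_1 _)); rewrite !inE eqxx.
apply (Rmult_le_compat_r _ _ _ E0).
rewrite /ok2; apply: (Rle_trans _ _ _ _ s2).
apply (Rmult_le_compat_r _ _ _ r0).
rewrite /ok1; apply: (Rle_trans _ _ _ _ s1).
apply (Rmult_le_compat_r _ _ _ r0).
have -> : #|[set _ : unit | true]| = 1%N by rewrite cardsT card_unit.
rewrite /=; exact: Rle_refl.
Qed.

End Count2.
Ltac brk h := repeat (case/orP: h => h).
Ltac memb := rewrite ?inE ?eqxx /=;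
  repeat match goal with h : is_true (?z \in ?C) |- context[?z \in ?C] => rewrite h end;
  repeat match goal with h : is_true (?z == ?a) |- context[?z == ?a] => rewrite h end;
  by rewrite ?orbT ?orTb.
Ltac kill z := first
 [ match goal with N : is_true (?a != ?b), h1 : is_true (z == ?a), h2 : is_true (z == ?b) |- _ =>
     by rewrite -(eqP h1) -(eqP h2) eqxx in N end
 | match goal with D : is_true [disjoint _ & _] |- _ => solve [apply: (@disjP _ _ _ D z); memb] end ].
Ltac DJ := let z := fresh "z" in let h1 := fresh "h" in let h2 := fresh "h" in
  apply: disjI => z h1 h2; rewrite ?inE in h1 h2; brk h1; brk h2; kill z.
Ltac SE := let z := fresh "z" in let h := fresh "h" in
  apply/setP => z; rewrite !inE; apply/idP/idP => h; brk h; rewrite h ?orbT //.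

Lemma cardsU_disj n (A B : {set 'I_n}) : [disjoint A & B] -> #|A :|: B| = (#|A| + #|B|)%N.
Proof. by move=> D; rewrite cardsU (disjoint_setI0 D) cards0 subn0. Qed.

Lemma uniq4 n (u w1 w2 w3 : 'I_n) : #|[set u; w1; w2; w3]| = 4 ->
  [&& u != w1, u != w2, u != w3, w1 != w2 & (w1 != w3) && (w2 != w3)].
Proof.
move=> h; have := set4_uniq (t := (u, w1, w2, w3)) h.
by rewrite /= !inE !negb_or => /andP[/and3P[-> -> ->] /andP[/andP[-> ->] /andP[-> _]]].
Qed.

Lemma cnt_ok c : (1 <= c)%N -> (1 + 1 + 1 + 1 + (1 + 1 + 1 + 1) + (4 * c - 1) + (4 * c - 1) + (4 * c - 1) + (4 * c - 1) + (4 * c - 1) == 4 * (5 * c + 1) - 1)%N.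
Proof. move=> h; apply/eqP; lia. Qed.

Lemma build n (H : hgraph n) c (x y u w1 w2 w3 v v1 v2 v3 : 'I_n) (C0 C4 C1 C2 C3 : {set 'I_n}) :
 (1 <= c)%N -> spans_K4m H [set u; w1; w2; w3] -> spans_K4m H [set v; v1; v2; v3] ->
 [disjoint [set u; w1; w2; w3] & [set x; y]] ->
 [disjoint [set v; v1; v2; v3] & [set u; w1; w2; w3] :|: [set x; y]] ->
 connector H c x u C0 ->
 [disjoint C0 & [set u; w1; w2; w3] :|: [set v; v1; v2; v3] :|: [set x; y]] ->
 connector H c y v C4 ->
 [disjoint C4 & [set u; w1; w2; w3] :|: [set v; v1; v2; v3] :|: [set x; y] :|: C0] ->
 connector H c w1 v1 C1 ->
 [disjoint C1 & [set u; w1; w2; w3] :|: [set v; v1; v2; v3] :|: [set x; y] :|: C0 :|: C4] ->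
 connector H c w2 v2 C2 ->
 [disjoint C2 & [set u; w1; w2; w3] :|: [set v; v1; v2; v3] :|: [set x; y] :|: C0 :|: C4 :|: C1] ->
 connector H c w3 v3 C3 ->
 [disjoint C3 & [set u; w1; w2; w3] :|: [set v; v1; v2; v3] :|: [set x; y] :|: C0 :|: C4 :|: C1 :|: C2] ->
 connector H (5 * c + 1) x y
   ([set u; w1; w2; w3] :|: [set v; v1; v2; v3] :|: C0 :|: C4 :|: C1 :|: C2 :|: C3).
Proof.
move=> cpos sA sB dA dB k0 d0 k4 d4 k1 d1 k2 d2 k3 d3.
have [cA _] := andP sA; have [cB _] := andP sB.
case/and5P: (uniq4 (eqP cA)) => n1 n2 n3 n4 /andP[n5 n6].
case/and5P: (uniq4 (eqP cB)) => n1' n2' n3' n4' /andP[n5' n6'].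
case/and5P: k0 => _ _ c0 f0x f0u.
case/and5P: k4 => _ _ c4 f4y f4v.
case/and5P: k1 => _ _ c1 f1w f1v.
case/and5P: k2 => _ _ c2 f2w f2v.
case/and5P: k3 => _ _ c3 f3w f3v.
apply/and5P; split.
- apply/negP => h; rewrite !inE in h; brk h; kill x.
- apply/negP => h; rewrite !inE in h; brk h; kill y.
- rewrite !cardsU_disj; last 6 first.
  all: try DJ.
  by rewrite !cards1 (eqP c0) (eqP c4) (eqP c1) (eqP c2) (eqP c3) (cnt_ok cpos).
- rewrite (_ : x |: _ = (x |: C0) :|: [set u; w1; w2; w3] :|: (v1 |: C1) :|: (v2 |: C2)
     :|: (v3 |: C3) :|: (v |: C4)); last by SE.
  apply: factorU; [apply: factorU; [apply: factorU; [ apply: factorU;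
    [apply: factorU; [done | exact: factor1 sA| DJ] | done | DJ] | done | DJ] | done | DJ] | done | DJ].
- rewrite (_ : y |: _ = (u |: C0) :|: (w1 |: C1) :|: (w2 |: C2) :|: (w3 |: C3)
     :|: [set v; v1; v2; v3] :|: (y |: C4)); last by SE.
  apply: factorU; [apply: factorU; [apply: factorU; [ apply: factorU;
    [apply: factorU; [done | done | DJ] | done | DJ] | done | DJ] | exact: factor1 sB | DJ] | done | DJ].
Qed.

Lemma ok7_conn n (H : hgraph n) c Vi Vj Q1 Q2 Q3 x y (t : T7 n) : (1 <= c)%N ->
  ok7 H c Vi Vj Q1 Q2 Q3 x y t -> connector H (5 * c + 1) x y (fS t).
Proof.
move=> cp; case: t => [[[[[[[[] [[[u w1] w2] w3]] [[[v v1] v2] v3]] C0] C4] C1] C2] C3].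
move=> /andP[/andP[/andP[/andP[/andP[/andP[/andP[_ /andP[gA dA]] /andP[gB dB]] /andP[k0 d0]] /andP[k4 d4]] /andP[k5 d5]] /andP[k6 d6]] /andP[k7 d7]].
case/and5P: gA => sA _ _ _ _; case/and5P: gB => sB _ _ _ _.
rewrite /Zb /tA /tB /set4 /= in sA sB dA dB k0 d0 k4 d4 k5 d5 k6 d6 k7 d7 *.
rewrite /fS /tA /tB /set4 /=.
exact: build.
Qed.

Section Fiber.
Variable n : nat.

Definition PV (S : {set 'I_n}) : {set Vt4 n} := setX (setX (setX S S) S) S.
Definition PS (S : {set 'I_n}) : {set T7 n} :=
  setX (setX (setX (setX (setX (setX (setX [set: unit] (PV S)) (PV S)) (powerset S))
    (powerset S)) (powerset S)) (powerset S)) (powerset S).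

Definition Mf (s : nat) : nat := 1 * (s * s * s * s) * (s * s * s * s) * 2 ^ s * 2 ^ s * 2 ^ s * 2 ^ s * 2 ^ s.

Lemma card_PS S : #|PS S| = Mf #|S|.
Proof. by rewrite /PS /PV !cardsX cardsT card_unit !card_powerset. Qed.

Lemma fiber_sub (A : {set T7 n}) (S : {set 'I_n}) :
  [set t in A | fS t == S] \subset PS S.
Proof.
apply/subsetP => t; rewrite inE => /andP[_ /eqP <-].
case: t => [[[[[[[[] [[[u w1] w2] w3]] [[[v v1] v2] v3]] C0] C4] C1] C2] C3].
rewrite /PS /PV !in_setX in_setT !powersetE /=.
repeat (apply/andP; split).
all: first [ apply/subsetP => z zC; rewrite /fS /tA /tB /= !in_setU zC ?orbT //
           | rewrite /fS /tA /tB /set4 /= !in_setU !inE eqxx ?orbT // ].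
Qed.

Lemma fiber_count (T : finType) (A : {set T}) (f : T -> {set 'I_n}) (B : {set {set 'I_n}}) M :
  (forall t, t \in A -> f t \in B) -> (forall S, #|[set t in A | f t == S]| <= M)%N ->
  (#|A| <= #|B| * M)%N.
Proof.
move=> hAB hM.
rewrite -sum1_card (partition_big_imset f).
apply: (@leq_trans (\sum_(S in f @: A) M)).
  apply: leq_sum => S _; rewrite -[X in (_ <= X)%N]/(M).
  apply: leq_trans (hM S); rewrite -sum1_card; apply: eq_leq; apply: eq_bigl => t; by rewrite inE.
rewrite sum_nat_const leq_mul2r; apply/orP; right; apply: subset_leq_card.
by apply/subsetP => S /imsetP[t tA ->]; apply: hAB.
Qed.

End Fiber.

Lemma Mf_gt0 s : (0 < s)%N -> (0 < Mf s)%N.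
Proof. by move=> hs; rewrite /Mf !muln_gt0 !expn_gt0 hs. Qed.

Lemma s_gt0 c : (0 < 4 * (5 * c + 1) - 1)%N. Proof. lia. Qed.

Lemma exp_split c : (1 <= c)%N ->
  (4 * (5 * c + 1) - 1 = 4 + 4 + (4 * c - 1) + (4 * c - 1) + (4 * c - 1) + (4 * c - 1) + (4 * c - 1))%N.
Proof. lia. Qed.

Lemma core n (H : hgraph n) c (Vi Vj Q1 Q2 Q3 : {set 'I_n}) x y eta eps :
  (1 <= c)%N -> (0 < eta)%Re -> (0 < eps)%Re ->
  is_closed H c eta Vi -> is_closed H c eta Vj -> is_closed H c eta Q1 ->
  is_closed H c eta Q2 -> is_closed H c eta Q3 ->
  x \in Vi -> y \in Vj ->
  (eps * pow (INR n) 4 <= INR #|[set t | good4 H Q1 Q2 Q3 Vi t]|)%Re ->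
  (eps * pow (INR n) 4 <= INR #|[set t | good4 H Q1 Q2 Q3 Vj t]|)%Re ->
  (8 * INR 6 <= eps * INR n)%Re -> (2 * INR (10 + 4 * (4 * c - 1)) <= eta * INR n)%Re ->
  ((eps / 2) ^ 2 * (eta / 2) ^ 5 / INR (Mf (4 * (5 * c + 1) - 1)) *
     pow (INR n) (4 * (5 * c + 1) - 1)
     <= INR #|[set S | connector H (5 * c + 1) x y S]|)%Re.
Proof.
move=> c1 etap epsp cl1 cl2 cl3 cl4 cl5 xV yV hA hB he hc.
have LB := count_chain c1 cl1 cl2 cl3 cl4 cl5 xV yV hA hB he hc etap epsp.
set s := (4 * (5 * c + 1) - 1)%N.
have hf : (#|[set t | ok7 H c Vi Vj Q1 Q2 Q3 x y t]| <=
           #|[set S | connector H (5 * c + 1) x y S]| * Mf s)%N.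
  apply: fiber_count.
    by move=> t; rewrite !inE; apply: ok7_conn.
  move=> S; case: (set_0Vmem [set t in [set t | ok7 H c Vi Vj Q1 Q2 Q3 x y t] | fS t == S]) => [-> | [t ht]].
    by rewrite cards0.
  apply: leq_trans (subset_leq_card (fiber_sub _ S)) _.
  rewrite card_PS; move: ht; rewrite !inE => /andP[okt /eqP <-].
  by rewrite (conn_card (ok7_conn c1 okt)).
have M0 : (0 < INR (Mf s))%Re.
  by apply: lt_0_INR; apply/ltP; exact: Mf_gt0 (s_gt0 c).
have hf' : (INR #|[set t | ok7 H c Vi Vj Q1 Q2 Q3 x y t]| <=
           INR #|[set S | connector H (5 * c + 1) x y S]| * INR (Mf s))%Re.
  by rewrite -mult_INR; apply: le_INR; apply/leP.
move: M0 hf'; set MM := INR (Mf s) => M0 hf'.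
apply: (Rmult_le_reg_r _ _ _ M0).
apply: Rle_trans hf'.
apply: Rle_trans LB.
rewrite /s (exp_split c1) !pow_add.
set P4 := pow (INR n) 4; set Pm := pow (INR n) (4 * c - 1).
right; field; lra.
Qed.

Section Pat.
Variables (n d : nat) (V : nat -> {set 'I_n}).
Hypothesis hdisj : forall i j, (1 <= i <= d)%N -> (1 <= j <= d)%N -> i <> j -> [disjoint V i & V j].

Lemma enum_pat (p : seq nat) : all (fun i => 1 <= i <= d)%N p ->
  forall S : {set 'I_n}, (forall k, (1 <= k <= d)%N -> #|S :&: V k| = count_mem k p) ->
  #|S| = size p ->
  exists s : seq 'I_n, [/\ size s = size p, S = [set z in s] & all2 (fun z k => z \in V k) s p].
Proof.
elim: p => [|i p IH] /=.
  move=> _ S _ /eqP; rewrite cards_eq0 => /eqP ->; exists [::]; split => //.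
case/andP => hi hp S hc hS.
have : (0 < #|S :&: V i|)%N by rewrite (hc i hi) /= eqxx.
case/card_gt0P => s0; rewrite inE => /andP[s0S s0V].
have inV : forall k, (1 <= k <= d)%N -> (s0 \in V k) = (i == k).
  move=> k hk; have [<-|ne] := eqVneq i k; first by [].
  apply/negbTE/negP => sk; have D := hdisj hi hk (elimN eqP ne).
  by rewrite (disjointFr D s0V) in sk.
have hc' : forall k, (1 <= k <= d)%N -> #|(S :\ s0) :&: V k| = count_mem k p.
  move=> k hk; have := hc k hk; rewrite /= (cardsD1 s0 (S :&: V k)) inE s0S inV //.
  have -> : (S :&: V k) :\ s0 = (S :\ s0) :&: V k by apply/setP => z; rewrite !inE andbA.
  by move=> /eqP; rewrite eqn_add2l => /eqP.
have hS' : #|S :\ s0| = size p.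
  by move: hS; rewrite (cardsD1 s0 S) s0S add1n => -[].
have [s [h1 h2 h3]] := IH hp (S :\ s0) hc' hS'.
exists (s0 :: s); split => /=; first by rewrite h1.
  by apply/setP => z; rewrite -(setD1K s0S) h2 !inE.
by rewrite s0V h3.
Qed.

End Pat.

Lemma q_exists (b : nat -> nat) (d : nat) : exists q : seq nat,
  [/\ all (fun i => 1 <= i <= d)%N q,
      forall k, (1 <= k <= d)%N -> count_mem k q = b k &
      size q = (\sum_(1 <= i < d.+1) b i)%N].
Proof.
elim: d => [|d [q [h1 h2 h3]]].
  exists [::]; split => //; first by move=> k; lia.
  by rewrite big_geq.
exists (q ++ nseq (b d.+1) d.+1); split.
- rewrite all_cat; apply/andP; split.
    by apply: (sub_all _ h1) => z /=; lia.
  apply/allP => z; rewrite mem_nseq => /andP[_ /eqP ->]; lia.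
- move=> k hk; rewrite count_cat count_nseq /=.
  have [e|ne] := eqVneq k d.+1.
    subst k; have -> : count_mem d.+1 q = 0%N.
      apply/count_memPn; apply/negP => m; move/allP: h1 => /(_ _ m); lia.
    by rewrite add0n mul1n.
  rewrite h2; last lia.
  by rewrite /= mul0n addn0.
- by rewrite size_cat size_nseq h3 [RHS]big_nat_recr.
Qed.

Lemma pat_count n (H : hgraph n) d (V : nat -> {set 'I_n})
  (hdisj : forall i j, (1 <= i <= d)%N -> (1 <= j <= d)%N -> i <> j -> [disjoint V i & V j])
  (i0 q1 q2 q3 : nat) (P : {set 'I_n} -> bool) :
  all (fun i => 1 <= i <= d)%N [:: i0; q1; q2; q3] ->
  (forall S, spans_K4m H S -> P S -> forall k, (1 <= k <= d)%N ->
       #|S :&: V k| = count_mem k [:: i0; q1; q2; q3]) ->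
  (count_K4m H P <= #|[set t | good4 H (V q1) (V q2) (V q3) (V i0) t]|)%N.
Proof.
move=> hall hc; rewrite /count_K4m.
apply: (@leq_trans #|[set set4 t | t in [set t | good4 H (V q1) (V q2) (V q3) (V i0) t]]|);
  last exact: leq_imset_card.
apply: subset_leq_card; apply/subsetP => S; rewrite inE => /andP[sS PS].
have cS : #|S| = size [:: i0; q1; q2; q3] by case/andP: sS => /eqP.
have [s [hs1 hs2 hs3]] := enum_pat hdisj hall (hc S sS PS) cS.
case: s hs1 hs2 hs3 => [|u [|w1 [|w2 [|w3 []]]]] // _ eS /=.
rewrite !andbT => /and4P[uV w1V w2V w3V].
apply/imsetP; exists (u, w1, w2, w3).
  have e4 : set4 (u, w1, w2, w3) = S.
    by rewrite eS /set4 /=; apply/setP => z; rewrite !inE !orbA.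
  by rewrite inE /good4 e4 sS /= uV w1V w2V w3V.
by rewrite eS /set4 /=; apply/setP => z; rewrite !inE !orbA.
Qed.

Lemma sum_b (a : nat -> nat) d : (1 <= d)%N -> (1 <= a 1)%N ->
  (\sum_(1 <= i < d.+1) a i)%N = 4 -> (\sum_(1 <= i < d.+1) (a i - (i == 1)))%N = 3.
Proof.
move=> hd ha hs; have h1 : (1 < d.+1)%N by rewrite ltnS.
move: hs; rewrite !(big_ltn h1).
have e : (\sum_(2 <= i < d.+1) (a i - (i == 1)) = \sum_(2 <= i < d.+1) a i)%N.
  apply: eq_big_nat => i /andP[hi _].
  by rewrite (_ : (i == 1) = false) ?subn0 //; apply/negbTE; rewrite neq_ltn hi orbT.
rewrite e eqxx /=; lia.
Qed.

Theorem lemma5p4 :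
  forall (eta eps : R) (c : nat), Rlt 0 eta -> Rlt 0 eps -> (1 <= c)%N ->
  exists eta' : R, Rlt 0 eta' /\ exists n0 : nat,
  forall (n : nat), (n0 <= n)%N ->
  forall (H : hgraph n), (forall e, e \in H -> #|e| = 3) ->
  forall (d : nat) (V : nat -> {set 'I_n}) (a : nat -> nat),
    (2 <= d <= 4)%N ->
    (forall i j, (1 <= i <= d)%N -> (1 <= j <= d)%N -> i <> j -> [disjoint V i & V j]) ->
    (forall i, (1 <= i <= d)%N -> is_closed H c eta (V i)) ->
    (1 <= a 1)%N ->
    (\sum_(1 <= i < d.+1) a i)%N = 4 ->
    Rle (Rmult eps (pow (INR n) 4)) (INR (count_K4m H (fun S => (
        [forall i : 'I_d.+1, (1 <= i)%N ==> (#|S :&: V i| == a i)])%N))) ->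
    Rle (Rmult eps (pow (INR n) 4)) (INR (count_K4m H (fun S => (
        [&& #|S :&: V 1| == (a 1 - 1)%N, #|S :&: V 2| == (a 2).+1 &
            [forall i : 'I_d.+1, (3 <= i)%N ==> (#|S :&: V i| == a i)]])%N))) ->
    is_closed H (5 * c + 1) eta' (V 1 :|: V 2).
Proof.
move=> eta eps c etap epsp c1.
exists ((eps / 2) ^ 2 * (eta / 2) ^ 5 / INR (Mf (4 * (5 * c + 1) - 1)))%Re; split.
  apply: Rdiv_lt_0_compat; last by apply: lt_0_INR; apply/ltP; exact: Mf_gt0 (s_gt0 c).
  by apply: Rmult_lt_0_compat; apply: pow_lt; lra.
have [N1 hN1] := INR_archimed eps (8 * INR 6) epsp.
have [N2 hN2] := INR_archimed eta (2 * INR (10 + 4 * (4 * c - 1))) etap.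
exists (N1 + N2)%N => n hn H _ d V a hd hdisj hcl ha1 hsum hA hB.
have n1 : (INR N1 <= INR n)%Re by apply: le_INR; apply/leP; apply: leq_trans hn; apply: leq_addr.
have n2 : (INR N2 <= INR n)%Re by apply: le_INR; apply/leP; apply: leq_trans hn; apply: leq_addl.
have he : (8 * INR 6 <= eps * INR n)%Re by nra.
have hc : (2 * INR (10 + 4 * (4 * c - 1)) <= eta * INR n)%Re by nra.
have d1 : (1 <= d)%N by case/andP: hd => h _; apply: leq_trans h.
have [q [qall qcnt qsize]] := q_exists (fun k => a k - (k == 1))%N d.
rewrite (sum_b d1 ha1 hsum) in qsize.
case: q qall qcnt qsize => [|q1 [|q2 [|q3 []]]] // qall qcnt _.
have hall : forall i0, (1 <= i0 <= d)%N -> all (fun i => 1 <= i <= d)%N [:: i0; q1; q2; q3].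
  by move=> i0 hi0; rewrite /= hi0.
have ld1 : (1 <= 1 <= d)%N by rewrite d1.
have ld2 : (1 <= 2 <= d)%N by case/andP: hd => ->.
have cA : (eps * pow (INR n) 4 <= INR #|[set t | good4 H (V q1) (V q2) (V q3) (V 1%N) t]|)%Re.
  apply: Rle_trans hA _; apply: le_INR; apply/leP; apply: (pat_count hdisj (hall 1%N ld1)).
  move=> S _ PS k hk; move/forallP: PS => /(_ (inord k)) /implyP.
  rewrite inordK; last by case/andP: hk => _ hk; rewrite ltnS.
  case/andP: (hk) => -> _ => /(_ isT) /eqP ->.
  rewrite (_ : count_mem k [:: 1%N; q1; q2; q3] = (1 == k) + count_mem k [:: q1; q2; q3])%N //.
  rewrite (qcnt k hk); case: eqVneq => [<-|ne] /=; last by rewrite subn0.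
  by rewrite subnKC.
have cB : (eps * pow (INR n) 4 <= INR #|[set t | good4 H (V q1) (V q2) (V q3) (V 2%N) t]|)%Re.
  apply: Rle_trans hB _; apply: le_INR; apply/leP; apply: (pat_count hdisj (hall 2%N ld2)).
  move=> S _ /and3P[/eqP e1 /eqP e2 PS] k hk.
  rewrite (_ : count_mem k [:: 2%N; q1; q2; q3] = (2 == k) + count_mem k [:: q1; q2; q3])%N //.
  rewrite (qcnt k hk).
  case: (ltngtP k 2) => [k1|k2|->].
  - have -> : k = 1%N by case/andP: hk => hk _; apply/eqP; rewrite eqn_leq hk -ltnS k1.
    by rewrite e1.
  - move/forallP: PS => /(_ (inord k)) /implyP.
    rewrite inordK; last by case/andP: hk => _ hk; rewrite ltnS.
    move=> /(_ k2) /eqP ->.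
    rewrite /= add0n;
    by rewrite (_ : (k == 1) = false) ?subn0 //; apply/negbTE; rewrite neq_ltn (ltnW k2) orbT.
  - by rewrite e2 /= subn0 add1n.
have clQ : forall k, (1 <= k <= d)%N -> k \in [:: q1; q2; q3] -> is_closed H c eta (V k).
  by move=> k hk _; apply: hcl.
have hq : all (fun i => 1 <= i <= d)%N [:: q1; q2; q3] by [].
move: hq => /and4P[hq1 hq2 hq3 _].
move=> x y; rewrite !in_setU => /orP[x1|x2] /orP[y1|y2] _; rewrite /is_close.
- exact: (core c1 etap epsp (hcl 1%N ld1) (hcl 1%N ld1) (hcl _ hq1) (hcl _ hq2) (hcl _ hq3) x1 y1 cA cA he hc).
- exact: (core c1 etap epsp (hcl 1%N ld1) (hcl 2%N ld2) (hcl _ hq1) (hcl _ hq2) (hcl _ hq3) x1 y2 cA cB he hc).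
- exact: (core c1 etap epsp (hcl 2%N ld2) (hcl 1%N ld1) (hcl _ hq1) (hcl _ hq2) (hcl _ hq3) x2 y1 cB cA he hc).
- exact: (core c1 etap epsp (hcl 2%N ld2) (hcl 2%N ld2) (hcl _ hq1) (hcl _ hq2) (hcl _ hq3) x2 y2 cB cB he hc).
Qed.
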